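(* Fix $c_p>0$, a finite set $\mathcal{T}$ of window lengths, $n\ge1$ and a fixed sequence of inter-arrival times $x_1,\dots,x_n>0$. Consider a randomized custom keep-alive policy which, given report $\hat\theta\ge0$, produces random window lengths $\tau_{\hat\theta,\mathcal{H}_{i-1}}$ used for arrival $i$, and charge externality payments $p_i=wm(\tau_{\hat\theta,\mathcal{H}_{i-1}},x_i)$. Define $$\kappa(\hat\theta)=\Big(\mathbb{E}\sum_{i=1}^n wm(\tau_{\hat\theta,\mathcal{H}_{i-1}},x_i),\ \mathbb{E}\sum_{i=1}^n cs(\tau_{\hat\theta,\mathcal{H}_{i-1}},x_i)\Big),\qquad \kappa(\tau)=\Big(\sum_{i=1}^n wm(\tau,x_i),\ \sum_{i=1}^n cs(\tau,x_i)\Big)\ (\tau\in\mathcal{T}),$$ and $$D(\theta)=\max\Big(0,\ \sup_{\hat\theta\ge0}\ \min_{\tau\in\mathcal{T}}\big(\kappa(\tau)-\kappa(\hat\theta)\big)\cdot(1,\theta)\Big).$$ Suppose $R_n$ bounds the policy's expected regret under truthful reporting: for every $\theta\ge0$, $\kappa(\theta)\cdot(1,\theta)-\min_{\tau\in\mathcal{T}}\kappa(\tau)\cdot(1,\theta)\le R_n$. Then for every true type $\theta\ge0$ and every report $\hat\theta\ge0$, the customer's expected total cost satisfies $$\mathbb{E}\sum_{i=1}^n \mathrm{cost}_i(\text{report }\theta)\le\mathbb{E}\sum_{i=1}^n\mathrm{cost}_i(\text{report }\hat\theta)+R_n+D(\theta).$$ Consequently, externality payments are $\varepsilon$-IC with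 $\varepsilon=\frac1n\big(R_n+\sup_{\theta}D(\theta)\big)$.
   Context: For a window length $\tau\in[0,\infty]$ and inter-arrival time $x>0$: $cs(\tau,x)=1$ if $x>\tau$ and $0$ otherwise; $wm(\tau,x)=c_px$ if $x\le\tau$ and $c_p\tau$ if $x>\tau$. $\mathcal{H}_{i}=(x_1,\dots,x_i)$ is the history of inter-arrival times. A customer with true cold-start cost $\theta\ge0$ reporting $\hat\theta$ incurs on arrival $i$ the cost $\mathrm{cost}_i=p_i+\theta\cdot cs(\tau_{\hat\theta,\mathcal{H}_{i-1}},x_i)$. Expectations are over the randomness of the policy. A payment rule is $\varepsilon$-IC if for all $\theta,\hat\theta$ the expected total cost of truthful reporting is at most the expected total cost of reporting $\hat\theta$ plus $n\varepsilon$. (An example of such a policy is exponential weights, choosing $\tau_j\in\mathcal{T}$ with probability proportional to $e^{-L_{i-1}(\tau_j,\mathcal{H}_{i-1},\hat\theta)}$, where $L_{i-1}(\tau,\mathcal{H}_{i-1},\theta)=\sum_{j\le i-1}wm(\tau,x_j)+\theta\sum_{j\le i-1}cs(\tau,x_j)$.) *)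

(* Defs.v *)
From mathcomp Require Import all_boot all_order all_algebra.
From mathcomp Require Import all_classical all_reals all_analysis measurable_realfun.
Set Implicit Arguments. Unset Strict Implicit. Unset Printing Implicit Defensive.
Import Order.TTheory GRing.Theory Num.Theory.
Local Open Scope ring_scope.
Local Open Scope ereal_scope.

Section KeepAlive.
Context {R : realType}.

(* Window lengths live in [0, +oo], represented in \bar R (+oo = infinite window). *)
Definition cs (tau : \bar R) (x : R) : R := if tau < x%:E then 1%R else 0%R.

Definition wm (cp : R) (tau : \bar R) (x : R) : R :=
  if x%:E <= tau then (cp * x)%R else (cp * fine tau)%R.

(* A randomized keep-alive policy: given the report theta_hat and the history
   H_{i-1} (the seq of past inter-arrival times), it returns a random window
   length (a function of the outcome of the policy's randomness). *)
Definition policy (Omega : Type) := R -> seq R -> Omega -> \bar R.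

Variables (d : measure_display) (Omega : measurableType d) (P : probability Omega R).
Variables (cp : R) (xs : seq R) (pol : policy Omega).

(* window used for arrival i (0-indexed): tau_{theta_hat, H_{i-1}} with H_{i-1} = take i xs *)
Definition win (th_hat : R) (i : nat) : Omega -> \bar R := pol th_hat (take i xs).

Definition Ewm (th_hat : R) : \bar R :=
  \int[P]_w (\sum_(i < size xs) wm cp (win th_hat i w) (nth 0%R xs i))%:E.

Definition Ecs (th_hat : R) : \bar R :=
  \int[P]_w (\sum_(i < size xs) cs (win th_hat i w) (nth 0%R xs i))%:E.

Definition kappa_pol_dot (th_hat th : R) : \bar R := Ewm th_hat + th%:E * Ecs th_hat.

Definition kappa_tau_dot (tau : \bar R) (th : R) : R :=
  (\sum_(i < size xs) wm cp tau (nth 0%R xs i) +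
   th * \sum_(i < size xs) cs tau (nth 0%R xs i))%R.

Definition minT (T : seq (\bar R)) (f : \bar R -> \bar R) : \bar R :=
  \big[mine/+oo]_(t <- T) f t.

Definition Dfun (T : seq (\bar R)) (th : R) : \bar R :=
  maxe 0 (ereal_sup [set minT T (fun t => (kappa_tau_dot t th)%:E - kappa_pol_dot th_hat th)
                    | th_hat in [set z : R | (0 <= z)%R]]).

(* expected total cost of a customer of true type theta reporting theta_hat,
   with externality payments p_i = wm(tau_i, x_i):
   E sum_i cost_i = E sum_i (p_i + theta * cs(tau_i, x_i)) *)
Definition Ecost (th_hat th : R) : \bar R :=
  \int[P]_w (\sum_(i < size xs)
     (wm cp (win th_hat i w) (nth 0%R xs i) + th * cs (win th_hat i w) (nth 0%R xs i)))%:E.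

Definition eps_IC (eps : \bar R) : Prop :=
  forall th th_hat : R, (0 <= th)%R -> (0 <= th_hat)%R ->
    Ecost th th <= Ecost th_hat th + (size xs)%:R%:E * eps.

End KeepAlive.

(* Main.v *)
Require Import Defs.
From mathcomp Require Import all_boot all_order all_algebra.
From mathcomp Require Import all_classical all_reals all_analysis measurable_realfun.
From mathcomp Require Import lra.
Import Order.TTheory GRing.Theory Num.Theory.
Local Open Scope ring_scope.
Local Open Scope ereal_scope.
Local Open Scope classical_set_scope.
Local Open Scope ereal_scope.

Lemma mcs (R : realType) d (Omega : measurableType d) (f : Omega -> \bar R) (x : R) :
  measurable_fun setT f -> measurable_fun setT (fun w => cs (f w) x).
Proof.
move=> mf; rewrite /cs; apply: measurable_fun_ifT => //.
apply: (measurable_fun_bool true).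
rewrite setTI (_ : _ @^-1` _ = [set w | f w < x%:E]); last by apply/seteqP; split => w /=.
by rewrite -[X in measurable X]setTI; apply: measurable_lte.
Qed.

Lemma mwm (R : realType) d (Omega : measurableType d) (f : Omega -> \bar R) (cp x : R) :
  measurable_fun setT f -> measurable_fun setT (fun w => wm cp (f w) x).
Proof.
move=> mf; rewrite /wm; apply: measurable_fun_ifT => //.
  apply: (measurable_fun_bool true).
  rewrite setTI (_ : _ @^-1` _ = [set w | x%:E <= f w]); last by apply/seteqP; split => w /=.
  by rewrite -[X in measurable X]setTI; apply: measurable_lee.
apply: measurable_funM => //; exact: measurableT_comp.
Qed.

Lemma minT_sub (R : realType) (T : seq (\bar R)) (f : \bar R -> R) (A : R) :
  minT T (fun t => (f t)%:E - A%:E) = minT T (fun t => (f t)%:E) - A%:E.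
Proof.
rewrite /minT; elim: T => [|t T IH]; first by rewrite !big_nil.
rewrite !big_cons IH; case: (\big[mine/+oo]_(j <- T) (f j)%:E) => [r| |] /=.
- rewrite -!EFinB /mine !lte_fin ltrBlDr subrK; by case: ifP.
- by rewrite /mine /= !ltry.
- by rewrite /mine /=.
Qed.

Lemma Ecost_split (R : realType) (d : measure_display) (Omega : measurableType d)
    (P : probability Omega R) (cp : R) (xs : seq R) (pol : @policy R Omega) th_hat th :
  (0 < cp)%R -> (0 <= th)%R ->
  (forall x, x \in xs -> (0 < x)%R) ->
  (forall (th_hat : R) (h : seq R), measurable_fun setT (pol th_hat h)) ->
  (forall (th_hat : R) (h : seq R) w, 0 <= pol th_hat h w) ->
  Ecost P cp xs pol th_hat th = kappa_pol_dot P cp xs pol th_hat th.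
Proof.
move=> cp0 th0 xs0 mpol pol0.
have wm0 i w : (0 <= wm cp (win xs pol th_hat i w) (nth 0%R xs i))%R.
  rewrite /wm; case: ifP => _.
    case: (ltnP i (size xs)) => hi; last by rewrite nth_default ?mulr0.
    by rewrite mulr_ge0 ?(ltW cp0) // ltW // xs0 // mem_nth.
  by rewrite mulr_ge0 ?(ltW cp0) // fine_ge0 //; apply: pol0.
have cs0 i w : (0 <= cs (win xs pol th_hat i w) (nth 0%R xs i))%R.
  by rewrite /cs; case: ifP.
rewrite /Ecost /kappa_pol_dot /Ewm /Ecs.
under eq_integral do rewrite big_split /= -mulr_sumr EFinD EFinM.
rewrite ge0_integralD //.
- rewrite ge0_integralZl_EFin //.
    by move=> w Hw; rewrite lee_fin sumr_ge0.
  by apply/measurable_EFinP; apply: measurable_sum => i; exact: mcs (mpol _ _).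
- by move=> w Hw; rewrite lee_fin sumr_ge0.
- by apply/measurable_EFinP; apply: measurable_sum => i; exact: mwm (mpol _ _).
- by move=> w Hw; rewrite mule_ge0 // lee_fin sumr_ge0.
- apply: emeasurable_funM => //; apply/measurable_EFinP.
  by apply: measurable_sum => i; exact: mcs (mpol _ _).
Qed.

Lemma minT_fin (R : realType) (T : seq (\bar R)) (f : \bar R -> R) :
  T != [::] -> exists r, minT T (fun t => (f t)%:E) = r%:E.
Proof.
case: T => // t s _; rewrite /minT.
elim: s t => [|u s IH] t; first by exists (f t); rewrite big_cons big_nil /mine /= ltry.
have [r Hr] := IH u; exists (Order.min (f t) r); rewrite big_cons Hr.
by rewrite /mine /Order.min /= lte_fin; case: ifP.
Qed.

Theorem lemma6p4 (R : realType) (d : measure_display) (Omega : measurableType d)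
    (P : probability Omega R) (cp : R) (T : seq (\bar R)) (xs : seq R)
    (pol : @policy R Omega) (Rn : R) :
  (0 < cp)%R ->
  T != [::] ->
  (forall t, t \in T -> 0 <= t) ->
  (0 < size xs)%N ->
  (forall x, x \in xs -> (0 < x)%R) ->
  (forall (th_hat : R) (h : seq R), measurable_fun setT (pol th_hat h)) ->
  (forall (th_hat : R) (h : seq R) w, 0 <= pol th_hat h w) ->
  (forall th : R, (0 <= th)%R ->
     kappa_pol_dot P cp xs pol th th
       - minT T (fun t => (kappa_tau_dot cp xs t th)%:E) <= Rn%:E) ->
  (forall th th_hat : R, (0 <= th)%R -> (0 <= th_hat)%R ->
     Ecost P cp xs pol th th
       <= Ecost P cp xs pol th_hat th + Rn%:E + Dfun P cp xs pol T th)
  /\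
  eps_IC P cp xs pol
    ((Rn%:E + ereal_sup [set Dfun P cp xs pol T th | th in [set z : R | (0 <= z)%R]])
       * ((size xs)%:R^-1)%:E).
Proof.
move=> cp0 T0 Tge0 n0 xs0 mpol pol0 reg.
have Ege0 th_hat th : (0 <= th)%R -> 0 <= Ecost P cp xs pol th_hat th.
  move=> th0; apply: integral_ge0 => w _; rewrite lee_fin sumr_ge0 // => i _.
  apply: addr_ge0; last by apply: mulr_ge0 => //; rewrite /cs; case: ifP.
  rewrite /wm; case: ifP => _.
    case: (ltnP i (size xs)) => hi; last by rewrite nth_default ?mulr0.
    by rewrite mulr_ge0 ?(ltW cp0) // ltW // xs0 // mem_nth.
  by rewrite mulr_ge0 ?(ltW cp0) // fine_ge0 //; apply: pol0.
have part1 : forall th th_hat : R, (0 <= th)%R -> (0 <= th_hat)%R ->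
     Ecost P cp xs pol th th
       <= Ecost P cp xs pol th_hat th + Rn%:E + Dfun P cp xs pol T th.
  move=> th th_hat th0 thh0.
  have K0 := Ege0 th th th0; have A0 := Ege0 th_hat th th0.
  have D0 : 0 <= Dfun P cp xs pol T th by rewrite /Dfun le_max lexx.
  have DA : minT T (fun t => (kappa_tau_dot cp xs t th)%:E - kappa_pol_dot P cp xs pol th_hat th)
            <= Dfun P cp xs pol T th.
    rewrite /Dfun le_max; apply/orP; right.
    by apply: ereal_sup_ubound; exists th_hat.
  have := reg th th0.
  rewrite (@Ecost_split R d Omega P cp xs pol th th cp0 th0 xs0 mpol pol0) in K0.
  rewrite (@Ecost_split R d Omega P cp xs pol th_hat th cp0 th0 xs0 mpol pol0) in A0.
  rewrite (@Ecost_split R d Omega P cp xs pol th_hat th cp0 th0 xs0 mpol pol0).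
  rewrite (@Ecost_split R d Omega P cp xs pol th th cp0 th0 xs0 mpol pol0).
  have [r Hr] := @minT_fin R T (fun t => kappa_tau_dot cp xs t th) T0.
  rewrite Hr.
  move: K0 A0 DA D0.
  case: (kappa_pol_dot P cp xs pol th th) => [k| |] // K0.
  case: (kappa_pol_dot P cp xs pol th_hat th) => [a| |] // A0.
    rewrite minT_sub Hr.
    case: (Dfun P cp xs pol T th) => [dd| |] //.
      rewrite -!EFinD !lee_fin => h1 _ h2; lra.
    by move=> _ _ _; rewrite addeC /= leey.
  move=> _ D0 _; rewrite addeC addeA.
  rewrite addey ?leey //.
  by case: (Dfun P cp xs pol T th) D0.
split => // th th_hat th0 thh0.
have nn0 : ((size xs)%:R != 0 :> R)%R by rewrite pnatr_eq0 -lt0n.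
rewrite (muleC ((size xs)%:R)%:E) -muleA -EFinM mulVf // mule1.
apply: (le_trans (part1 th th_hat th0 thh0)).
rewrite -addeA; apply: leeD2l; apply: leeD2l.
by apply: ereal_sup_ubound; exists th.
Qed.
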